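(* Let $X$ be a nonempty set and let $g,g_1\in\Gamma(X)$ with $g$ of height at least $2$. Writing $u\approx v$ for $[u]=[v]$ in $FT^1(X)$: (i) $g\approx g^cg\approx gg^c\approx gg^lg\approx gg^rg$ and $g^rgg^l\approx g^rg^cg^l$; (ii) $[gg^r],[gg^l],[g^rg],[g^lg]$ are idempotents of $FT(X)$; (iii) $[g^lg]\,\mathcal L\,[g^rg]\,\mathcal L\,[g]\,\mathcal R\,[gg^r]\,\mathcal R\,[gg^l]$ in $FT(X)$; (iv) $[g]\in S([g^rg^c],[g^cg^l])$; (v) $g_1\approx\beta_1(g_1)$.
   Context: Let $1$ be a symbol not in $X$. Elements of height $\ge 2$ are triples $g=(g^l,g^c,g^r)$; $\Gamma_0(X)=\{1\}$, $\Gamma_1(X)=X$, each $x\in X$ identified with $(1,x,1)$ (so $x^l=x^r=1$, $x^c=x$); for $i\ge 2$, $\Gamma_i(X)$ is the set of triples $g\in\Gamma_{i-1}(X)\times\Gamma_{i-2}(X)\times\Gamma_{i-1}(X)$ with $g^l\neq g^r$ and $g^c\in\{(g^l)^l,(g^l)^r\}\cap\{(g^r)^l,(g^r)^r\}$; $\Gamma(X)=\bigcup_{i\ge0}\Gamma_i(X)$, height of $g$ = the $i$ with $g\in\Gamma_i(X)$. Let $\rho$ be the smallest congruence on $\Gamma(X)^+$ containing $(1g,g),(g1,g),(gg,g)$ for all $g\in\Gamma(X)$ and $(g^cg^lg,g)$, $(gg^rg^c,g)$, $(g^rg^cgg^cg^l,g^rg^cg^l)$ for all $g$ of height $\ge2$.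 $FT^1(X)=\Gamma(X)^+/\rho$, $[u]$ the class of $u$, $FT(X)=FT^1(X)\setminus\{[1]\}$. For a word $w=x_1\cdots x_m$ over $\{l,c,r\}$, $g^{w}=(\cdots((g^{x_1})^{x_2})\cdots)^{x_m}$, e.g. $g^{c^{k}l}=((g^c)^{\cdots c})^l$ with $k$ letters $c$; $g^{c^0}=g$. For $g\neq1$: if $g$ has height $2n$, $\beta_1(g)=g^{c^n}g^{c^{n-1}l}g^{c^{n-1}}\cdots g^cg^lgg^rg^c\cdots g^{c^{n-1}}g^{c^{n-1}r}g^{c^n}$; if $g$ has height $2n+1$, $\beta_1(g)=1\,g^{c^n}g^{c^{n-1}l}g^{c^{n-1}}\cdots g^cg^lgg^rg^c\cdots g^{c^{n-1}}g^{c^{n-1}r}g^{c^n}\,1$; and $\beta_1(1)=1$. $S(e,f)=\{h\in E: fh=h=he,\ ehf=ef\}$ is the sandwich set of idempotents $e,f$; $\mathcal L,\mathcal R$ are Green's relations. *)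

(* Defs.v *)
From Stdlib Require Import List.
Import ListNotations.
Set Implicit Arguments.

Section Free.
Variable X : Type.

(* Raw terms: the symbol 1, generators x (identified with (1,x,1)), triples. *)
Inductive tm : Type :=
| One : tm
| Gen : X -> tm
| Tri : tm -> tm -> tm -> tm.

Definition pl (t : tm) : tm :=
  match t with One => One | Gen _ => One | Tri l _ _ => l end.
Definition pc (t : tm) : tm :=
  match t with One => One | Gen x => Gen x | Tri _ c _ => c end.
Definition pr (t : tm) : tm :=
  match t with One => One | Gen _ => One | Tri _ _ r => r end.

Fixpoint inG (n : nat) (t : tm) {struct n} : Prop :=
  match n with
  | 0 => t = One
  | 1 => exists x, t = Gen x
  | S (S i as j) =>
      exists l c r, t = Tri l c r /\ inG j l /\ inG i c /\ inG j r /\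
        l <> r /\ (c = pl l \/ c = pr l) /\ (c = pl r \/ c = pr r)
  end.

Definition inGamma (t : tm) : Prop := exists i, inG i t.

Fixpoint cpow (k : nat) (g : tm) : tm :=
  match k with 0 => g | S m => pc (cpow m g) end.

(* rho : smallest congruence containing the generating pairs.  Words of
   Gamma(X)^+ are represented by (nonempty) lists of elements of Gamma(X). *)
Inductive rho : list tm -> list tm -> Prop :=
| rho_1l g : inGamma g -> rho [One; g] [g]
| rho_1r g : inGamma g -> rho [g; One] [g]
| rho_sq g : inGamma g -> rho [g; g] [g]
| rho_cl g : (exists i, inG (S (S i)) g) -> rho [pc g; pl g; g] [g]
| rho_rc g : (exists i, inG (S (S i)) g) -> rho [g; pr g; pc g] [g]
| rho_5 g : (exists i, inG (S (S i)) g) ->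
    rho [pr g; pc g; g; pc g; pl g] [pr g; pc g; pl g]
| rho_refl u : rho u u
| rho_sym u v : rho u v -> rho v u
| rho_trans u v w : rho u v -> rho v w -> rho u w
| rho_ctx a u v b : rho u v -> rho (a ++ u ++ b) (a ++ v ++ b).

Definition Gword (s : list tm) : Prop := s <> [] /\ Forall inGamma s.

(* [u] lies in FT(X) = FT^1(X) \ {[1]} *)
Definition inFT (u : list tm) : Prop := ~ rho u [One].

Definition idem (u : list tm) : Prop := inFT u /\ rho (u ++ u) u.

(* Green's relations on FT(X); multipliers range over FT^1(X) = FT(X)^1
   ([One] plays the role of the adjoined identity). *)
Definition Lrel (a b : list tm) : Prop :=
  inFT a /\ inFT b /\
  exists s t, Gword s /\ Gword t /\ rho (s ++ a) b /\ rho (t ++ b) a.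
Definition Rrel (a b : list tm) : Prop :=
  inFT a /\ inFT b /\
  exists s t, Gword s /\ Gword t /\ rho (a ++ s) b /\ rho (b ++ t) a.

Definition sandwich (e f h : list tm) : Prop :=
  idem e /\ idem f /\ idem h /\
  rho (f ++ h) h /\ rho (h ++ e) h /\ rho (e ++ h ++ f) (e ++ f).

Fixpoint bleft (n : nat) (g : tm) : list tm :=
  match n with 0 => [] | S m => cpow (S m) g :: pl (cpow m g) :: bleft m g end.
Fixpoint bright (n : nat) (g : tm) : list tm :=
  match n with 0 => [] | S m => bright m g ++ [pr (cpow m g); cpow (S m) g] end.
Definition bcore (n : nat) (g : tm) : list tm := bleft n g ++ g :: bright n g.

(* beta1 h g, where h is the height of g *)
Definition beta1 (h : nat) (g : tm) : list tm :=
  match h with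
  | 0 => [One]
  | S _ => if Nat.even h then bcore (Nat.div2 h) g
           else One :: bcore (Nat.div2 h) g ++ [One]
  end.
End Free.

Arguments One {X}.

(* Main.v *)
Require Import Defs.
From Stdlib Require Import List Lia Arith.
Import ListNotations.

Lemma rho_at {X : Type} (a u v b w1 w2 : list (tm X)) :
  rho u v -> w1 = a ++ u ++ b -> w2 = a ++ v ++ b -> rho w1 w2.
Proof. intros H -> ->. apply rho_ctx; exact H. Qed.

Ltac step a b H := eapply rho_trans; [apply (rho_at a _ _ b _ _ H); reflexivity | ].
Ltac fin := apply rho_refl.

Lemma comp {X} (g : tm X) i : inG (S (S i)) g ->
  inG (S i) (pl g) /\ inG i (pc g) /\ inG (S i) (pr g) /\ pl g <> pr g /\
  (pc g = pl (pl g) \/ pc g = pr (pl g)) /\ (pc g = pl (pr g) \/ pc g = pr (pr g)) /\ g <> One.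
Proof.
  intro H. cbn [inG] in H.
  destruct H as (l & c & r & -> & H1 & H2 & H3 & H4 & H5 & H6). simpl.
  repeat split; auto; discriminate.
Qed.

Lemma notOne {X} (t : tm X) i : inG (S i) t -> t <> One.
Proof.
  destruct i; cbn [inG]; intro H.
  - destruct H as [x ->]; discriminate.
  - destruct H as (l & c & r & -> & _); discriminate.
Qed.

Definition allOne {X} (u : list (tm X)) := Forall (fun t => t = One) u.

Lemma rho_allOne {X} (u v : list (tm X)) : rho u v -> (allOne u <-> allOne v).
Proof.
  unfold allOne.
  induction 1; try (destruct H as [i H]; destruct (comp _ _ H) as (_&_&_&_&_&_&Hn);
    pose proof (notOne _ _ (proj1 (comp _ _ H)))); 
  repeat rewrite ?Forall_cons_iff, ?Forall_app; try tauto.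
  all: tauto.
Qed.

Lemma inFT_of {X} (u : list (tm X)) : ~ allOne u -> inFT u.
Proof.
  intros H R. apply H. apply (proj2 (rho_allOne _ _ R)). constructor; auto.
Qed.

Lemma inGa {X} n (t : tm X) : inG n t -> inGamma t.
Proof. intro H; exists n; exact H. Qed.

Section Basic.
Context {X : Type} (g : tm X) (H2 : exists i, inG (S (S i)) g).

Let Gc : inGamma (pc g).
Proof. destruct H2 as [i Hi]. exact (inGa _ _ (proj1 (proj2 (comp _ _ Hi)))). Qed.
Let Gl : inGamma (pl g).
Proof. destruct H2 as [i Hi]. exact (inGa _ _ (proj1 (comp _ _ Hi))). Qed.
Let Gr : inGamma (pr g).
Proof. destruct H2 as [i Hi]. exact (inGa _ _ (proj1 (proj2 (proj2 (comp _ _ Hi))))). Qed.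
Let Gg : inGamma g.
Proof. destruct H2 as [i Hi]. exact (inGa _ _ Hi). Qed.

Let cl := rho_cl H2.
Let rc := rho_rc H2.
Let r5 := rho_5 H2.
Let sqc := rho_sq Gc.
Let sqg := rho_sq Gg.

Lemma F_cg : rho [pc g; g] [g].
Proof.
  step [pc g] (@nil (tm X)) (rho_sym cl).
  step (@nil (tm X)) [pl g; g] sqc.
  step (@nil (tm X)) (@nil (tm X)) cl. fin.
Qed.

Lemma F_gc : rho [g; pc g] [g].
Proof.
  step (@nil (tm X)) [pc g] (rho_sym rc).
  step [g; pr g] (@nil (tm X)) sqc.
  step (@nil (tm X)) (@nil (tm X)) rc. fin.
Qed.

Lemma F_glg : rho [g; pl g; g] [g].
Proof.
  step (@nil (tm X)) [pl g; g] (rho_sym F_gc).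
  step [g] (@nil (tm X)) cl.
  step (@nil (tm X)) (@nil (tm X)) sqg. fin.
Qed.

Lemma F_grg : rho [g; pr g; g] [g].
Proof.
  step [g; pr g] (@nil (tm X)) (rho_sym F_cg).
  step (@nil (tm X)) [g] rc.
  step (@nil (tm X)) (@nil (tm X)) sqg. fin.
Qed.

Lemma F_rgl : rho [pr g; g; pl g] [pr g; pc g; pl g].
Proof.
  step [pr g] [pl g] (rho_sym F_cg).
  step [pr g; pc g] [pl g] (rho_sym F_gc).
  step (@nil (tm X)) (@nil (tm X)) r5. fin.
Qed.

Lemma inFT_g a b : inFT (a ++ g :: b).
Proof.
  apply inFT_of. unfold allOne. rewrite Forall_app, Forall_cons_iff.
  destruct H2 as [i Hi]. destruct (comp _ _ Hi) as (_&_&_&_&_&_&Hn). tauto.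
Qed.

Lemma part_i :
  (rho [g] [pc g; g] /\ rho [pc g; g] [g; pc g] /\ rho [g; pc g] [g; pl g; g] /\
   rho [g; pl g; g] [g; pr g; g] /\ rho [pr g; g; pl g] [pr g; pc g; pl g]).
Proof.
  pose proof F_cg; pose proof F_gc; pose proof F_glg; pose proof F_grg; pose proof F_rgl.
  repeat split; eauto using rho_sym, rho_trans.
Qed.

Lemma part_ii :
  (idem [g; pr g] /\ idem [g; pl g] /\ idem [pr g; g] /\ idem [pl g; g]).
Proof.
  repeat split; try apply (inFT_g [] [_]); try apply (inFT_g [_] []).
  - step (@nil (tm X)) [pr g] F_grg. fin.
  - step (@nil (tm X)) [pl g] F_glg. fin.
  - step [pr g] (@nil (tm X)) F_grg. fin.
  - step [pl g] (@nil (tm X)) F_glg. fin.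
Qed.

Lemma part_iii :
  (Lrel [pl g; g] [pr g; g] /\ Lrel [pr g; g] [g] /\
   Rrel [g] [g; pr g] /\ Rrel [g; pr g] [g; pl g]).
Proof.
  assert (GW1 : forall t : tm X, inGamma t -> Gword [t]).
  { intros t Ht. split; [discriminate | constructor; auto]. }
  assert (GW2 : forall t u : tm X, inGamma t -> inGamma u -> Gword [t; u]).
  { intros t u Ht Hu. split; [discriminate | repeat constructor; auto]. }
  repeat split; try apply (inFT_g [] [_]); try apply (inFT_g [_] []);
    try apply (inFT_g [] []).
  - exists [pr g; g], [pl g; g]. split; [auto|]; split; [auto|]; split.
    + step [pr g] (@nil (tm X)) F_glg. fin.
    + step [pl g] (@nil (tm X)) F_grg. fin.
  - exists [g], [pr g]. split; [auto|]; split; [auto|]; split.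
    + step (@nil (tm X)) (@nil (tm X)) F_grg. fin.
    + fin.
  - exists [pr g], [g]. split; [auto|]; split; [auto|]; split.
    + fin.
    + step (@nil (tm X)) (@nil (tm X)) F_grg. fin.
  - exists [g; pl g], [g; pr g]. split; [auto|]; split; [auto|]; split.
    + step (@nil (tm X)) [pl g] F_grg. fin.
    + step (@nil (tm X)) [pr g] F_glg. fin.
Qed.

End Basic.

Lemma idem_resp {X} (u v : list (tm X)) : rho u v -> idem v -> idem u.
Proof.
  intros R [Hf Hi]. split.
  - intro R1. apply Hf. eapply rho_trans; [apply rho_sym, R | exact R1].
  - eapply rho_trans; [| apply rho_sym, R].
    eapply rho_trans; [| exact Hi].
    eapply rho_trans.
    + apply (rho_at [] u v u); [exact R | reflexivity | reflexivity].
    + apply (rho_at v u v []); [exact R | rewrite app_nil_r; reflexivity | simpl; rewrite app_nil_r; reflexivity].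
Qed.

Lemma idem_single {X} i (t : tm X) : inG (S i) t -> idem [t].
Proof.
  intro H. split.
  - apply inFT_of. unfold allOne. rewrite Forall_cons_iff. pose proof (notOne _ _ H). tauto.
  - apply rho_sq. exact (inGa _ _ H).
Qed.

Lemma part_iv {X} (g : tm X) (H2 : exists i, inG (S (S i)) g) :
  sandwich [pr g; pc g] [pc g; pl g] [g].
Proof.
  destruct H2 as [i Hi] eqn:E.
  destruct (comp _ _ Hi) as (Hl & Hc & Hr & _ & Hcl & Hcr & _).
  assert (Gc : inGamma (pc g)) by exact (inGa _ _ Hc).
  split; [|split; [|split; [|split; [|split]]]].
  - destruct i as [|j].
    + cbn [inG] in Hc. rewrite Hc.
      apply (idem_resp _ [pr g]); [apply rho_1r, (inGa _ _ Hr) | apply (idem_single _ _ Hr)].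
    + destruct Hcr as [-> | ->]; apply (part_ii (pr g) (ex_intro _ j Hr)).
  - destruct i as [|j].
    + cbn [inG] in Hc. rewrite Hc.
      apply (idem_resp _ [pl g]); [apply rho_1l, (inGa _ _ Hl) | apply (idem_single _ _ Hl)].
    + destruct Hcl as [-> | ->]; apply (part_ii (pl g) (ex_intro _ j Hl)).
  - split; [apply (inFT_g g (ex_intro _ i Hi) [] []) | apply rho_sq, (inGa _ _ Hi)].
  - apply (rho_cl (ex_intro _ i Hi)).
  - apply (rho_rc (ex_intro _ i Hi)).
  - simpl. eapply rho_trans; [apply (rho_5 (ex_intro _ i Hi))|].
    apply (rho_at [pr g] [pc g] [pc g; pc g] [pl g]); [apply rho_sym, rho_sq, Gc | reflexivity | reflexivity].
Qed.

Lemma W_S {X} k (g : tm X) :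
  bcore (S k) g = [cpow (S k) g; pl (cpow k g)] ++ bcore k g ++ [pr (cpow k g); cpow (S k) g].
Proof. unfold bcore. simpl. rewrite <- app_assoc. reflexivity. Qed.

Lemma inG_cpow {X} h (g : tm X) : inG h g -> forall k, 2 * k <= h -> inG (h - 2 * k) (cpow k g).
Proof.
  intros H k. induction k as [|k IH]; intro Hk.
  - replace (h - 2 * 0) with h by lia. exact H.
  - assert (E : h - 2 * k = S (S (h - 2 * S k))) by lia.
    specialize (IH ltac:(lia)). rewrite E in IH.
    exact (proj1 (proj2 (comp _ _ IH))).
Qed.

Ltac eqs := simpl; rewrite ?app_nil_r; rewrite <- ?app_assoc; simpl; reflexivity.

Lemma inv {X} h (g : tm X) : inG h g -> forall k, k <= Nat.div2 h ->
  rho (bcore k g) [g] /\ rho (cpow k g :: bcore k g) (bcore k g) /\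
  rho (bcore k g ++ [cpow k g]) (bcore k g).
Proof.
  intros H k. pose proof (Nat.div2_odd h) as Hd.
  induction k as [|k IH]; intro Hk.
  - unfold bcore; simpl. split; [apply rho_refl|]. split; apply rho_sq, (inGa _ _ H).
  - destruct (IH ltac:(lia)) as (I1 & I2 & I3).
    pose proof (inG_cpow _ _ H k ltac:(lia)) as Hgk.
    assert (E : h - 2 * k = S (S (h - 2 * S k))) by lia. rewrite E in Hgk.
    set (gk := cpow k g) in *. set (W := bcore k g) in *.
    assert (Hk2 : exists i, inG (S (S i)) gk) by (eexists; exact Hgk).
    assert (Gc : inGamma (pc gk)) by exact (inGa _ _ (proj1 (proj2 (comp _ _ Hgk)))).
    assert (Step : rho (bcore (S k) g) W).
    { rewrite W_S. change (cpow (S k) g) with (pc gk). fold gk W.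
      assert (A : rho W (gk :: W ++ [gk])).
      { eapply rho_trans; [apply rho_sym, I3|].
        apply (rho_at [] W (gk :: W) [gk]); [apply rho_sym, I2 | reflexivity | reflexivity]. }
      eapply rho_trans.
      { apply (rho_at [pc gk; pl gk] _ _ [pr gk; pc gk] _ _ A); reflexivity. }
      eapply rho_trans.
      { apply (rho_at [] _ _ ((W ++ [gk]) ++ [pr gk; pc gk]) _ _ (rho_cl Hk2)); eqs. }
      eapply rho_trans.
      { apply (rho_at (gk :: W) _ _ [] _ _ (rho_rc Hk2)); eqs. }
      eapply rho_trans.
      { apply (rho_at [gk] _ _ [] _ _ I3); eqs. }
      exact I2. }
    split; [|split].
    + eapply rho_trans; [exact Step | exact I1].
    + rewrite W_S. change (cpow (S k) g) with (pc gk). fold gk.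
      apply (rho_at [] _ _ (pl gk :: W ++ [pr gk; pc gk]) _ _ (rho_sq Gc)); eqs.
    + rewrite W_S. change (cpow (S k) g) with (pc gk). fold gk.
      apply (rho_at ([pc gk; pl gk] ++ W ++ [pr gk]) _ _ [] _ _ (rho_sq Gc)); eqs.
Qed.

Lemma part_v {X} (g1 : tm X) : forall h, inG h g1 -> rho [g1] (beta1 h g1).
Proof.
  intros h H. destruct h as [|h'].
  - cbn [inG] in H. subst. simpl. apply rho_refl.
  - destruct (inv _ _ H (Nat.div2 (S h')) (le_n _)) as (I1 & _).
    unfold beta1. destruct (Nat.even (S h')).
    + apply rho_sym, I1.
    + apply rho_sym. eapply rho_trans.
      { apply (rho_at [One] _ _ [One] _ _ I1); reflexivity. }
      eapply rho_trans.
      { apply (rho_at [] _ _ [One] _ _ (rho_1l (inGa _ _ H))); reflexivity. }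
      apply rho_1r, (inGa _ _ H).
Qed.

Theorem lemma3p1 (X : Type) (HX : inhabited X) (g g1 : tm X)
  (Hg : exists i, inG (S (S i)) g) (Hg1 : inGamma g1) :
  (* (i) *)
  (rho [g] [pc g; g] /\ rho [pc g; g] [g; pc g] /\ rho [g; pc g] [g; pl g; g] /\
   rho [g; pl g; g] [g; pr g; g] /\ rho [pr g; g; pl g] [pr g; pc g; pl g]) /\
  (* (ii) *)
  (idem [g; pr g] /\ idem [g; pl g] /\ idem [pr g; g] /\ idem [pl g; g]) /\
  (* (iii) *)
  (Lrel [pl g; g] [pr g; g] /\ Lrel [pr g; g] [g] /\
   Rrel [g] [g; pr g] /\ Rrel [g; pr g] [g; pl g]) /\
  (* (iv) *)
  sandwich [pr g; pc g] [pc g; pl g] [g] /\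
  (* (v) *)
  (forall h, inG h g1 -> rho [g1] (beta1 h g1)).
Proof.
  split; [exact (part_i g Hg)|].
  split; [exact (part_ii g Hg)|].
  split; [exact (part_iii g Hg)|].
  split; [exact (part_iv g Hg)|].
  exact (part_v g1).
Qed.
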